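(* Let $N_f\ge 2$ be an integer, let $\beta>0$, $\lambda>0$, $r_c>0$, and let $p_r(i)=\frac{i^{-\beta}}{\sum_{k=1}^{N_f}k^{-\beta}}$ for $i=1,\dots,N_f$. Consider the optimization problem $$\max_{p_c(1),\dots,p_c(N_f)}\ \sum_{i=1}^{N_f}p_r(i)\left(1-e^{-\lambda p_c(i)\pi r_c^2}\right)\quad\text{s.t. } \sum_{i=1}^{N_f}p_c(i)=1,\ p_c(i)\ge 0,\ i=1,\dots,N_f.$$ If $\frac{N_f^{N_f}}{N_f!}<e^{\frac{\lambda\pi r_c^2}{\beta}}$, then the optimal solution is $$p_c^*(i)=\frac{1}{N_f}\left(1+\frac{\beta}{\lambda\pi r_c^2}\sum_{j=1}^{N_f}\ln\Big(\frac{j}{i}\Big)\right),\quad i=1,\dots,N_f.$$ Otherwise, the optimal solution is $$p_c^*(i)=\begin{cases}\frac{1}{i^*}\left(1+\frac{\beta}{\lambda\pi r_c^2}\sum_{j=1}^{i^*}\ln\Big(\frac{j}{i}\Big)\right), & i\le i^*,\\ 0, & i^*<i\le N_f,\end{cases}$$ for an integer $i^*\in\{1,\dots,N_f\}$ satisfying $\frac{\lambda\pi r_c^2}{\beta}-1\le i^*\le \frac{\lambda\pi r_c^2}{\beta}+\ln\big(\sqrt{2\pi N_f}\big)+1$.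
   Context: $p_r$ is the Zipf popularity distribution over a catalog of $N_f$ files; $p_c(i)$ is the probability that a user caches file $i$; the objective is the probability (offloading opportunity) that a file requested by a user is cached by some user within distance $r_c$ when users form a Poisson point process of density $\lambda$ in the plane. *)

(* Defs.v *)
From Stdlib Require Import Reals Lra Lia.
Open Scope R_scope.

(* sum1 f n = f 1 + f 2 + ... + f n  (files are indexed from 1) *)
Fixpoint sum1 (f : nat -> R) (n : nat) : R :=
  match n with
  | O => 0
  | S m => sum1 f m + f (S m)
  end.

Definition pr (beta : R) (Nf : nat) (i : nat) : R :=
  Rpower (INR i) (- beta) / sum1 (fun k => Rpower (INR k) (- beta)) Nf.

Definition offload (beta lam rc : R) (Nf : nat) (pc : nat -> R) : R :=
  sum1 (fun i => pr beta Nf i * (1 - exp (- (lam * pc i * PI * rc ^ 2)))) Nf.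

Definition feasible (Nf : nat) (pc : nat -> R) : Prop :=
  sum1 pc Nf = 1 /\ (forall i, (1 <= i <= Nf)%nat -> 0 <= pc i).

Definition optimal_solution (beta lam rc : R) (Nf : nat) (p : nat -> R) : Prop :=
  feasible Nf p /\
  (forall q, feasible Nf q -> offload beta lam rc Nf q <= offload beta lam rc Nf p) /\
  (forall q, feasible Nf q -> offload beta lam rc Nf q = offload beta lam rc Nf p ->
     forall i, (1 <= i <= Nf)%nat -> q i = p i).

(* Main.v *)
Require Import Defs.
From Stdlib Require Import Reals Arith Lra Lia.
From Coquelicot Require Import Coquelicot.
Open Scope R_scope.

Lemma sum1_ext f g n : (forall i, (1 <= i <= n)%nat -> f i = g i) -> sum1 f n = sum1 g n.
Proof. induction n; simpl; intros H; [reflexivity|]. rewrite IHn, H; [reflexivity|lia|intros; apply H; lia]. Qed.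
Lemma sum1_plus f g n : sum1 (fun i => f i + g i) n = sum1 f n + sum1 g n.
Proof. induction n; simpl; [ring|]. rewrite IHn; ring. Qed.
Lemma sum1_minus f g n : sum1 (fun i => f i - g i) n = sum1 f n - sum1 g n.
Proof. induction n; simpl; [ring|]. rewrite IHn; ring. Qed.
Lemma sum1_scal a f n : sum1 (fun i => a * f i) n = a * sum1 f n.
Proof. induction n; simpl; [ring|]. rewrite IHn; ring. Qed.
Lemma sum1_const a n : sum1 (fun _ => a) n = INR n * a.
Proof. induction n; simpl sum1; [simpl; ring|]. rewrite IHn, S_INR; ring. Qed.
Lemma sum1_le f g n : (forall i, (1 <= i <= n)%nat -> f i <= g i) -> sum1 f n <= sum1 g n.
Proof. induction n; simpl; intros H; [lra|]. assert (f (S n) <= g (S n)) by (apply H; lia).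
  assert (sum1 f n <= sum1 g n) by (apply IHn; intros; apply H; lia). lra. Qed.
Lemma sum1_pos f n : (1 <= n)%nat -> (forall i, (1 <= i <= n)%nat -> 0 < f i) -> 0 < sum1 f n.
Proof. induction n; intros Hn H; [lia|]. simpl. destruct n.
  - simpl. assert (0 < f 1%nat) by (apply H; lia). lra.
  - assert (0 < sum1 f (S n)) by (apply IHn; [lia|intros; apply H; lia]).
    assert (0 < f (S (S n))) by (apply H; lia). lra. Qed.
Lemma sum1_zero f n : (forall i, (1 <= i <= n)%nat -> 0 <= f i) -> sum1 f n = 0 ->
  forall i, (1 <= i <= n)%nat -> f i = 0.
Proof. induction n; simpl; intros H Hs i Hi; [lia|].
  assert (0 <= sum1 f n).
  { replace 0 with (sum1 (fun _ => 0) n) by (rewrite sum1_const; ring). apply sum1_le; intros; apply H; lia. }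
  assert (0 <= f (S n)) by (apply H; lia).
  destruct (Nat.eq_dec i (S n)) as [->|Hne]; [lra|].
  apply IHn; [intros; apply H; lia| lra | lia]. Qed.
Lemma sum1_tail f m n : (m <= n)%nat -> (forall i, (m < i <= n)%nat -> f i = 0) -> sum1 f n = sum1 f m.
Proof. induction n; intros Hm H.
  - assert (m = 0%nat) by lia. subst; reflexivity.
  - destruct (Nat.eq_dec m (S n)) as [->|Hne]; [reflexivity|].
    simpl. rewrite H by lia. rewrite IHn by (lia || (intros; apply H; lia)). ring. Qed.

Lemma exp_strict x : exp x = 1 + x -> x = 0.
Proof. intros H. destruct (Req_dec x 0); auto. pose proof (exp_ineq1 x H0). lra. Qed.

Lemma kkt beta lam rc Nf p mu :
  (1 <= Nf)%nat -> 0 < lam -> 0 < rc ->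
  feasible Nf p ->
  (forall i, (1 <= i <= Nf)%nat -> 0 < pr beta Nf i) ->
  (forall i, (1 <= i <= Nf)%nat ->
     let D := pr beta Nf i * (lam * PI * rc ^ 2) * exp (- (lam * p i * PI * rc ^ 2)) in
     D <= mu /\ (p i = 0 \/ D = mu)) ->
  optimal_solution beta lam rc Nf p.
Proof.
  intros HN Hl Hr [Hp1 Hp2] Hw HK.
  set (c := lam * PI * rc ^ 2).
  assert (Hc : 0 < c) by (unfold c; pose proof PI_RGT_0; pose proof (pow_lt rc 2 Hr); 
     apply Rmult_lt_0_compat; [apply Rmult_lt_0_compat|]; lra).
  set (T := fun q i => pr beta Nf i * (1 - exp (- (lam * q i * PI * rc ^ 2))) -
                       pr beta Nf i * (1 - exp (- (lam * p i * PI * rc ^ 2)))).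
  set (U := fun q i => mu * (q i - p i) - T q i).
  assert (HU : forall q, feasible Nf q -> forall i, (1 <= i <= Nf)%nat ->
      0 <= U q i /\ (U q i = 0 -> q i = p i)).
  { intros q [Hq1 Hq2] i Hi. destruct (HK i Hi) as [HD Hor]. cbv zeta in *.
    pose proof (Hw i Hi) as Hwi. pose proof (Hq2 i Hi). pose proof (Hp2 i Hi).
    set (x := - (c * (q i - p i))).
    assert (Heq : exp (- (lam * q i * PI * rc ^ 2)) = exp (- (lam * p i * PI * rc ^ 2)) * exp x).
    { rewrite <- exp_plus. f_equal. unfold x, c. ring. }
    set (E := exp (- (lam * p i * PI * rc ^ 2))) in *.
    assert (HE : 0 < E) by apply exp_pos.
    pose proof (exp_ineq1_le x) as Hx.
    assert (HT : T q i = pr beta Nf i * E * (1 - exp x)) by (unfold T; cbv beta; rewrite Heq; fold E; ring).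
    assert (H1 : T q i <= pr beta Nf i * c * E * (q i - p i)).
    { rewrite HT. replace (pr beta Nf i * c * E * (q i - p i)) with (pr beta Nf i * E * (- x)) by (unfold x; ring).
      apply Rmult_le_compat_l; [nra|lra]. }
    assert (H2 : pr beta Nf i * c * E * (q i - p i) <= mu * (q i - p i)).
    { fold c in HD. destruct Hor as [Hz|Hz].
      - rewrite Hz. rewrite Rminus_0_r. apply Rmult_le_compat_r; lra.
      - fold c in Hz. rewrite Hz. lra. }
    split; [unfold U; lra|]. intros HU0. unfold U in HU0.
    assert (Ht : T q i = pr beta Nf i * c * E * (q i - p i)) by lra.
    rewrite HT in Ht.
    assert (exp x = 1 + x).
    { replace (pr beta Nf i * c * E * (q i - p i)) with (pr beta Nf i * E * (- x)) in Ht by (unfold x; ring).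
      assert (0 < pr beta Nf i * E) by nra.
      apply Rmult_eq_reg_l with (pr beta Nf i * E); lra. }
    apply exp_strict in H3. unfold x in H3. nra. }
  assert (Hsum : forall q, feasible Nf q ->
     sum1 (U q) Nf = offload beta lam rc Nf p - offload beta lam rc Nf q).
  { intros q [Hq1 _]. unfold U, T, offload.
    rewrite sum1_minus, sum1_scal, sum1_minus, sum1_minus, Hq1, Hp1. ring. }
  split; [split; auto|split].
  - intros q Hq. rewrite <- (Rminus_0_r (offload _ _ _ _ q)).
    assert (0 <= sum1 (U q) Nf).
    { replace 0 with (sum1 (fun _ => 0) Nf) by (rewrite sum1_const; ring).
      apply sum1_le. intros i Hi. apply (HU q Hq i Hi). }
    rewrite Hsum in H by auto. lra.
  - intros q Hq Heq i Hi. apply (HU q Hq i Hi).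
    apply (sum1_zero (U q) Nf); auto.
    + intros j Hj; apply (HU q Hq j Hj).
    + rewrite Hsum by auto. lra.
Qed.

Lemma ln_lb (x : R) : 0 <= x -> 2 * x / (2 + x) <= ln (1 + x).
Proof.
  intros Hx. destruct (Req_dec x 0) as [->|Hx0].
  { replace (1+0) with 1 by ring. rewrite ln_1. unfold Rdiv. lra. }
  set (f := fun y => ln (1 + y) - 2 * y / (2 + y)).
  set (f' := fun y => / (1 + y) - 4 / (2 + y) ^ 2).
  destruct (MVT_cor2 f f' 0 x) as [c [Hc1 Hc2]]; [lra| |].
  - intros c Hc. apply is_derive_Reals. unfold f, f'.
    auto_derive; [lra|]. field. lra.
  - assert (f' c >= 0).
    { unfold f'. apply Rle_ge.
      replace (/ (1 + c) - 4 / (2 + c) ^ 2) with (c^2 / ((1+c) * (2+c)^2)) by (field; lra).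
      apply Rmult_le_pos; [nra|]. apply Rlt_le, Rinv_0_lt_compat. nra. }
    assert (f 0 = 0) by (unfold f; replace (1+0) with 1 by ring; rewrite ln_1; field).
    unfold f in *. nra.
Qed.

Definition S1 n := sum1 (fun j => ln (INR j)) n.
Definition g n := INR n * ln (INR n) - S1 n.

Lemma ln_fact n : ln (INR (fact n)) = S1 n.
Proof. induction n.
  - simpl. rewrite ln_1. reflexivity.
  - unfold S1 in *. cbn [sum1]. rewrite <- IHn. rewrite fact_simpl, mult_INR.
    rewrite ln_mult; [ring| |]. apply lt_0_INR; lia. apply lt_0_INR, lt_O_fact. Qed.

Lemma sum1_lnratio i m : (1 <= i)%nat ->
  sum1 (fun j => ln (INR j / INR i)) m = S1 m - INR m * ln (INR i).
Proof. intros Hi. unfold S1. rewrite <- sum1_const, <- sum1_minus. apply sum1_ext.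
  intros j Hj. rewrite ln_div; auto; apply lt_0_INR; lia. Qed.

Lemma g_succ n : g (S n) = g n + INR n * (ln (INR n + 1) - ln (INR n)).
Proof. unfold g, S1. cbn [sum1]. rewrite S_INR. ring. Qed.

Lemma ln_le_m1 y : 0 < y -> ln y <= y - 1.
Proof. intros Hy. pose proof (exp_ineq1_le (ln y)). rewrite exp_ln in H; lra. Qed.

Lemma g_le n : (1 <= n)%nat -> g n <= INR n - 1.
Proof. induction n; intros Hn; [lia|]. destruct n.
  - unfold g, S1. simpl. rewrite ln_1. lra.
  - rewrite g_succ. assert (IH := IHn ltac:(lia)).
    set (N := INR (S n)) in *. assert (HN : 1 <= N) by (unfold N; rewrite S_INR; pose proof (pos_INR n); lra).
    assert (ln (N + 1) - ln N <= 1 / N).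
    { rewrite <- ln_div by lra. replace (1 / N) with ((N+1)/N - 1) by (field; lra).
      apply ln_le_m1. apply Rdiv_lt_0_compat; lra. }
    rewrite S_INR. fold N.
    assert (N * (ln (N + 1) - ln N) <= 1).
    { replace 1 with (N * (1 / N)) at 2 by (field; lra). apply Rmult_le_compat_l; lra. }
    lra. Qed.

Lemma g_ge n : (1 <= n)%nat -> INR n - 1 - ln (INR n) / 2 <= g n.
Proof. induction n; intros Hn; [lia|]. destruct n.
  - unfold g, S1. simpl. rewrite ln_1. lra.
  - rewrite g_succ. assert (IH := IHn ltac:(lia)).
    set (N := INR (S n)) in *. assert (HN : 1 <= N) by (unfold N; rewrite S_INR; pose proof (pos_INR n); lra).
    assert (Hd : 2 / (2 * N + 1) <= ln (N + 1) - ln N).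
    { rewrite <- ln_div by lra. replace ((N+1)/N) with (1 + 1/N) by (field; lra).
      replace (2 / (2 * N + 1)) with (2 * (1/N) / (2 + 1/N)) by (field; lra).
      apply ln_lb. apply Rlt_le, Rdiv_lt_0_compat; lra. }
    rewrite S_INR. fold N.
    assert (1 <= (N + 1/2) * (ln (N + 1) - ln N)).
    { replace 1 with ((N + 1/2) * (2 / (2 * N + 1))) at 1 by (field; lra).
      apply Rmult_le_compat_l; lra. }
    lra. Qed.

Lemma exists_m t n : 0 < t -> (1 <= n)%nat ->
  exists m, (1 <= m <= n)%nat /\ g m < t /\ ((m < n)%nat -> t <= g (S m)).
Proof. intros Ht. induction n; intros Hn; [lia|]. destruct n.
  - exists 1%nat. split; [lia|]. split; [unfold g, S1; simpl; rewrite ln_1; lra| lia].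
  - destruct (Rlt_le_dec (g (S (S n))) t).
    + exists (S (S n)). split; [lia|split; auto; lia].
    + destruct (IHn ltac:(lia)) as [m [Hm1 [Hm2 Hm3]]]. exists m. split; [lia|split; auto].
      intros Hlt. destruct (Nat.eq_dec m (S n)) as [->|]; auto. apply Hm3; lia. Qed.

Lemma ln_le x y : 0 < x -> x <= y -> ln x <= ln y.
Proof. intros Hx [H|H]; [apply Rlt_le, ln_increasing; auto| subst; lra]. Qed.

Definition pif beta lam rc (m : nat) := fun i : nat => if (i <=? m)%nat
                   then / INR m *
                        (1 + beta / (lam * PI * rc ^ 2) *
                             sum1 (fun j => ln (INR j / INR i)) m)
                   else 0.

Lemma core Nf beta lam rc m : (1 <= m <= Nf)%nat -> 0 < beta -> 0 < lam -> 0 < rc ->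
  g m < lam * PI * rc ^ 2 / beta ->
  ((m < Nf)%nat -> lam * PI * rc ^ 2 / beta <= g (S m)) ->
  optimal_solution beta lam rc Nf (pif beta lam rc m).
Proof.
  intros Hm Hb Hl Hr Hg Hg2.
  set (c := lam * PI * rc ^ 2) in *.
  assert (Hc : 0 < c) by (unfold c; pose proof PI_RGT_0; pose proof (pow_lt rc 2 Hr);
     apply Rmult_lt_0_compat; [apply Rmult_lt_0_compat|]; lra).
  assert (HmR : 1 <= INR m) by (apply (le_INR 1); lia).
  set (K := (c + beta * S1 m) / INR m).
  set (Z := sum1 (fun k => Rpower (INR k) (- beta)) Nf).
  assert (HZ : 0 < Z) by (apply sum1_pos; [lia|]; intros; unfold Rpower; apply exp_pos).
  set (P := fun i => (K - beta * ln (INR i)) / c).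
  assert (HP : forall i, (1 <= i <= m)%nat -> pif beta lam rc m i = P i).
  { intros i Hi. unfold pif. replace (i <=? m)%nat with true by (symmetry; apply Nat.leb_le; lia).
    fold c. rewrite sum1_lnratio by lia. unfold P, K. field. lra. }
  assert (HP0 : forall i, (m < i)%nat -> pif beta lam rc m i = 0).
  { intros i Hi. unfold pif. replace (i <=? m)%nat with false by (symmetry; apply Nat.leb_gt; lia). reflexivity. }
  assert (HlnI : forall i, (1 <= i)%nat -> 0 < INR i) by (intros; apply lt_0_INR; lia).
  apply (kkt beta lam rc Nf _ (c * exp (- K) / Z)); [lia|auto|auto| | |].
  - split.
    + rewrite (sum1_tail _ m Nf) by (lia || (intros; apply HP0; lia)).
      rewrite (sum1_ext _ (fun i => /c * K - (beta / c) * ln (INR i))).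
      2:{ intros i Hi. rewrite HP by lia. unfold P. field. lra. }
      rewrite sum1_minus, sum1_const, sum1_scal. fold (S1 m). unfold K. field. lra.
    + intros i Hi. destruct (Nat.le_gt_cases i m) as [Hle|Hgt].
      * rewrite HP by lia. unfold P. apply Rmult_le_pos; [|apply Rlt_le, Rinv_0_lt_compat; lra].
        assert (ln (INR i) <= ln (INR m)) by (apply ln_le; [apply HlnI; lia| apply le_INR; lia]).
        assert (beta * g m < c).
        { unfold Rdiv in Hg. apply Rmult_lt_compat_l with (r := beta) in Hg; auto.
          rewrite <- Rmult_assoc, (Rmult_comm beta c), Rmult_assoc, Rinv_r in Hg; lra. }
        assert (K - beta * ln (INR m) > 0).
        { unfold K, g in *. apply Rlt_gt. replace ((c + beta * S1 m) / INR m - beta * ln (INR m))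
            with ((c - beta * (INR m * ln (INR m) - S1 m)) / INR m) by (field; lra).
          apply Rdiv_lt_0_compat; lra. }
        nra.
      * rewrite HP0 by lia. lra.
  - intros i Hi. unfold pr. fold Z. apply Rdiv_lt_0_compat; auto. unfold Rpower; apply exp_pos.
  - intros i Hi. unfold pr. fold Z. unfold Rpower.
    destruct (Nat.le_gt_cases i m) as [Hle|Hgt].
    + rewrite HP by lia. unfold P.
      replace (lam * ((K - beta * ln (INR i)) / c) * PI * rc ^ 2) with ((K - beta * ln (INR i)) / c * c)
        by (unfold c; ring).
      replace ((K - beta * ln (INR i)) / c * c) with (K - beta * ln (INR i)) by (field; lra).
      cbv zeta.
      assert (Heq : exp (- beta * ln (INR i)) / Z * c * exp (- (K - beta * ln (INR i))) = c * exp (- K) / Z).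
      { replace (- (K - beta * ln (INR i))) with (- K + - (- beta * ln (INR i))) by ring.
        rewrite exp_plus, !exp_Ropp. field. pose proof (exp_pos K); pose proof (exp_pos (- beta * ln (INR i))); repeat split; lra. }
      fold c. rewrite Heq. split; [lra|right; reflexivity].
    + rewrite HP0 by lia. cbv zeta.
      replace (lam * 0 * PI * rc ^ 2) with 0 by ring. rewrite Ropp_0, exp_0. fold c. split; [|left; reflexivity].
      assert (Hmn : (m < Nf)%nat) by lia. specialize (Hg2 Hmn).
      assert (K <= beta * ln (INR i)).
      { assert (ln (INR (S m)) <= ln (INR i)) by (apply ln_le; [apply HlnI; lia| apply le_INR; lia]).
        assert (K <= beta * ln (INR (S m))).
        { unfold K. apply (Rmult_le_reg_r (INR m)); [lra|]. unfold Rdiv. rewrite Rmult_assoc, Rinv_l by lra.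
          rewrite Rmult_1_r. unfold g, S1 in Hg2. cbn [sum1] in Hg2. fold (S1 m) in Hg2.
          rewrite S_INR in *.
          apply (Rmult_le_compat_l beta) in Hg2; [|lra].
          replace (beta * (c / beta)) with c in Hg2 by (field; lra). nra. }
        nra. }
      assert (exp (- beta * ln (INR i)) <= exp (- K)) by (destruct (Req_dec (- beta * ln (INR i)) (- K)) as [He|He]; [rewrite He; lra| apply Rlt_le, exp_increasing; lra]).
      apply Rmult_le_compat_l with (r := c / Z) in H0; [|apply Rlt_le, Rdiv_lt_0_compat; lra].
      unfold Rdiv in *. lra.
Qed.

Lemma opt_ext beta lam rc Nf p p' : (forall i, (1 <= i <= Nf)%nat -> p i = p' i) ->
  optimal_solution beta lam rc Nf p -> optimal_solution beta lam rc Nf p'.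
Proof.
  intros He [[F1 F2] [O1 O2]].
  assert (Hoff : offload beta lam rc Nf p = offload beta lam rc Nf p').
  { unfold offload. apply sum1_ext. intros i Hi. rewrite He; auto. }
  split; [split|split].
  - rewrite <- F1. symmetry. apply sum1_ext. auto.
  - intros i Hi. rewrite <- He; auto.
  - intros q Hq. rewrite <- Hoff. auto.
  - intros q Hq Heq i Hi. rewrite <- He; auto. apply O2; auto. congruence.
Qed.

Lemma ln_ratio Nf : (1 <= Nf)%nat -> ln (INR Nf ^ Nf / INR (fact Nf)) = g Nf.
Proof. intros H. assert (0 < INR Nf) by (apply lt_0_INR; lia).
  rewrite ln_div; [| apply pow_lt; auto | apply lt_0_INR, lt_O_fact].
  rewrite ln_pow by auto. rewrite ln_fact. reflexivity. Qed.

Lemma ln_sqrt' x : 0 < x -> ln (sqrt x) = ln x / 2.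
Proof. intros Hx. assert (0 < sqrt x) by (apply sqrt_lt_R0; auto).
  rewrite <- (sqrt_sqrt x) at 2 by lra. rewrite ln_mult by auto. field. Qed.

Theorem proposition1 (Nf : nat) (beta lam rc : R) :
  (2 <= Nf)%nat -> 0 < beta -> 0 < lam -> 0 < rc ->
  (INR Nf ^ Nf / INR (fact Nf) < exp (lam * PI * rc ^ 2 / beta) ->
     optimal_solution beta lam rc Nf
       (fun i => / INR Nf *
          (1 + beta / (lam * PI * rc ^ 2) *
               sum1 (fun j => ln (INR j / INR i)) Nf)))
  /\
  (~ (INR Nf ^ Nf / INR (fact Nf) < exp (lam * PI * rc ^ 2 / beta)) ->
     exists istar : nat,
       (1 <= istar <= Nf)%nat /\
       lam * PI * rc ^ 2 / beta - 1 <= INR istar /\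
       INR istar <= lam * PI * rc ^ 2 / beta + ln (sqrt (2 * PI * INR Nf)) + 1 /\
       optimal_solution beta lam rc Nf
         (fun i => if (i <=? istar)%nat
                   then / INR istar *
                        (1 + beta / (lam * PI * rc ^ 2) *
                             sum1 (fun j => ln (INR j / INR i)) istar)
                   else 0)).
Proof.
  intros HN Hb Hl Hr.
  set (t := lam * PI * rc ^ 2 / beta).
  assert (Ht : 0 < t).
  { unfold t. pose proof PI_RGT_0; pose proof (pow_lt rc 2 Hr).
    apply Rdiv_lt_0_compat; auto. apply Rmult_lt_0_compat; [apply Rmult_lt_0_compat|]; lra. }
  assert (Hpos : 0 < INR Nf ^ Nf / INR (fact Nf)).
  { apply Rdiv_lt_0_compat; [apply pow_lt, lt_0_INR; lia| apply lt_0_INR, lt_O_fact]. }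
  split.
  - intros H. assert (Hg : g Nf < t).
    { rewrite <- ln_ratio by lia. rewrite <- (ln_exp t). apply ln_increasing; auto. }
    apply (opt_ext _ _ _ _ (pif beta lam rc Nf)).
    + intros i Hi. unfold pif. replace (i <=? Nf)%nat with true by (symmetry; apply Nat.leb_le; lia).
      reflexivity.
    + apply core; auto; lia.
  - intros H. assert (Hg : t <= g Nf).
    { rewrite <- ln_ratio by lia. rewrite <- (ln_exp t). apply ln_le; [apply exp_pos|lra]. }
    destruct (exists_m t Nf Ht ltac:(lia)) as [m [Hm1 [Hm2 Hm3]]].
    assert (Hmn : (m < Nf)%nat).
    { destruct (Nat.eq_dec m Nf) as [->|]; [lra|lia]. }
    exists m. split; [auto|split; [|split]].
    + pose proof (Hm3 Hmn). pose proof (g_le (S m) ltac:(lia)). rewrite S_INR in H1. fold t. lra.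
    + pose proof (g_ge m ltac:(lia)). fold t.
      assert (HmR : 1 <= INR m) by (apply (le_INR 1); lia).
      assert (HNR : INR m <= INR Nf) by (apply le_INR; lia).
      pose proof PI2_1.
      rewrite ln_sqrt' by nra.
      assert (ln (INR m) <= ln (2 * PI * INR Nf)) by (apply ln_le; nra).
      lra.
    + apply core; auto; lia.
Qed.
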